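(* Let $f\colon(X,p)\to(Y,q)$ be a basepointed cubical map, where $Y$ is a compact non-positively curved cube complex and $X$ is connected. If $Z$ and $Z'$ are completions of $f$, then $Z=Z'$.
   Context: Cube complexes are built from unit cubes; non-positively curved means vertex links are flag; a cubical map sends $n$-cubes isometrically onto $n$-cubes; it is a local isometry if the induced maps on vertex links are injective with full images. Moves on a cubical map $g\colon(X,p)\to(Y,q)$: folding (identify two distinct edges with a common initial vertex and the same image), cube identification (identify two distinct $n$-cubes with equal $1$-skeleta), cube attachment (if edges $e_1,\dots,e_{n+1}$ at a vertex $v$ are not the edges at $v$ of a cube of $X$ but their images are the edges at $g(v)$ of an $(n+1)$-cube $c$ of $Y$, attach an $(n+1)$-cube along $v,e_1,\dots,e_{n+1}$ mapping to $c$). Each move yields a natural cubical map compatible with maps to $Y$. A completion of $f$ is the direct limit $(\hat X,\hat p)$ of a sequence $(X,p)=(X_1,p_1)\to(X_2,p_2)\to\cdots$ of such moves whose induced cubical map $\hat X\to Y$ is a local isometry. *)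

(* Defs.v *)
(* Combinatorial model of cube complexes:
   a cube complex is a presheaf on the category of cubes [0,1]^n and
   isometric face embeddings (including symmetries of cubes), on which the
   symmetry groups act freely.  An element of [cell X n] is an n-cube of X
   together with a parametrisation by [0,1]^n ("oriented n-cube"). *)
From Stdlib Require Import Relations List.
From mathcomp Require Import all_boot.

Set Implicit Arguments.
Unset Strict Implicit.
Unset Printing Implicit Defensive.

(* vertices of the standard n-cube [0,1]^n *)
Definition V (n : nat) := {ffun 'I_n -> bool}.

(* f is (the vertex map of) an isometric embedding of [0,1]^m onto a face
   of [0,1]^n: coordinates are permuted injectively, possibly reflected,
   and the remaining coordinates are fixed to constants. *)
Definition is_face (m n : nat) (f : {ffun V m -> V n}) : Prop :=
  exists (iota : 'I_m -> 'I_n) (s : 'I_m -> bool) (b : 'I_n -> bool),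
    injective iota /\
    forall v : V m,
      (forall i, f v (iota i) = addb (v i) (s i)) /\
      (forall j, (forall i, iota i <> j) -> f v j = b j).

Definition fid (n : nat) : {ffun V n -> V n} := [ffun v => v].
Definition fcomp k m n (f : {ffun V m -> V n}) (g : {ffun V k -> V m})
  : {ffun V k -> V n} := [ffun v => f (g v)].

Record CubeCx := {
  cell : nat -> Type;
  act : forall m n, {ffun V m -> V n} -> cell n -> cell m;
  act_id : forall n (x : cell n), act (fid n) x = x;
  act_comp : forall k m n (f : {ffun V m -> V n}) (g : {ffun V k -> V m})
      (x : cell n), is_face f -> is_face g ->
      act (fcomp f g) x = act g (act f x);
  (* the symmetries of the cube act freely: geometric cubes are genuine cubes *)
  act_free : forall n (s : {ffun V n -> V n}) (x : cell n),
      is_face s -> act s x = x -> s = fid n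
}.

Arguments act {c m n} f x.

Record cmap (X Y : CubeCx) := {
  fn : forall n, cell X n -> cell Y n;
  fn_nat : forall m n (f : {ffun V m -> V n}) (x : cell X n),
      is_face f -> fn (act f x) = act f (fn x)
}.
Arguments fn {X Y} c {n} x.

Program Definition cid (X : CubeCx) : cmap X X :=
  {| fn := fun n x => x |}.

Program Definition ccomp (X Y Z : CubeCx) (g : cmap Y Z) (f : cmap X Y)
  : cmap X Z := {| fn := fun n x => fn g (fn f x) |}.
Next Obligation. by rewrite !fn_nat. Qed.

Definition ceq (X Y : CubeCx) (u v : cmap X Y) : Prop :=
  forall n (x : cell X n), fn u x = fn v x.

Definition is_iso (X Y : CubeCx) (h : cmap X Y) : Prop :=
  exists k : cmap Y X, ceq (ccomp k h) (cid X) /\ ceq (ccomp h k) (cid Y).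

Definition vert0 (n : nat) : {ffun V 0 -> V n} := [ffun _ => [ffun _ => false]].
Definition vert1 : {ffun V 0 -> V 1} := [ffun _ => [ffun _ => true]].
Definition cedge (n : nat) (i : 'I_n) : {ffun V 1 -> V n} :=
  [ffun v : V 1 => [ffun j => (j == i) && v ord0]].

Definition src (X : CubeCx) (e : cell X 1) : cell X 0 := act (vert0 1) e.
Definition tgt (X : CubeCx) (e : cell X 1) : cell X 0 := act vert1 e.
Definition base (X : CubeCx) n (x : cell X n) : cell X 0 := act (vert0 n) x.

Definition compact (X : CubeCx) : Prop :=
  (exists N, forall n, N < n -> cell X n -> False) /\
  (forall n, exists l : list (cell X n), forall x, List.In x l).

Definition connected (X : CubeCx) : Prop :=
  forall u w : cell X 0,
    clos_refl_sym_trans _ (fun a b => exists e : cell X 1, src e = a /\ tgt e = b) u w.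

(* Non-positively curved: every vertex link is a flag simplicial complex.
   A k-simplex of lk(v) is a corner at v of a (k+1)-cube, i.e. an oriented
   (k+1)-cube based at v up to permutation of coordinates; its vertices are
   the edges of the cube at that corner. *)
Definition npc (X : CubeCx) : Prop :=
  (* simplices are determined by their vertices *)
  (forall n (x y : cell X n), base x = base y ->
      (forall i, act (cedge i) x = act (cedge i) y) -> x = y) /\
  (* the vertices of a simplex are distinct *)
  (forall n (x : cell X n) (i j : 'I_n), i != j ->
      act (cedge i) x <> act (cedge j) x) /\
  (* flag condition *)
  (forall n (v : cell X 0) (e : 'I_n -> cell X 1),
      (forall i, src (e i) = v) ->
      (forall i j, i != j -> exists s : cell X 2,
          act (cedge ord0) s = e i /\ act (cedge (@Ordinal 2 1 isT)) s = e j) ->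
      exists x : cell X n, base x = v /\ forall i, act (cedge i) x = e i).

(* local isometry: the induced maps on vertex links are injective with
   full images *)
Definition local_isometry (X Y : CubeCx) (h : cmap X Y) : Prop :=
  (forall n (x y : cell X n), base x = base y -> fn h x = fn h y -> x = y) /\
  (forall n (v : cell X 0) (c : cell Y n), base c = fn h v ->
      (forall i : 'I_n, exists e : cell X 1, src e = v /\ fn h e = act (cedge i) c) ->
      exists x : cell X n, base x = v /\ fn h x = c).

(* folding: B is obtained from A by identifying two distinct edges e1, e2
   with a common initial vertex and the same image in Y *)
Definition is_fold (A B Y : CubeCx) (gA : cmap A Y) (phi : cmap A B) : Prop :=
  exists e1 e2 : cell A 1,
    e1 <> e2 /\ src e1 = src e2 /\ fn gA e1 = fn gA e2 /\
    fn phi e1 = fn phi e2 /\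
    forall (W : CubeCx) (psi : cmap A W), fn psi e1 = fn psi e2 ->
      exists u : cmap B W, ceq (ccomp u phi) psi /\
        forall u' : cmap B W, ceq (ccomp u' phi) psi -> ceq u' u.

(* cube identification: B is obtained from A by identifying two distinct
   n-cubes with equal 1-skeleta *)
Definition is_cube_ident (A B : CubeCx) (phi : cmap A B) : Prop :=
  exists n (c1 c2 : cell A n),
    c1 <> c2 /\
    (forall k (eps : {ffun V k -> V n}), k <= 1 -> is_face eps ->
        act eps c1 = act eps c2) /\
    fn phi c1 = fn phi c2 /\
    forall (W : CubeCx) (psi : cmap A W), fn psi c1 = fn psi c2 ->
      exists u : cmap B W, ceq (ccomp u phi) psi /\
        forall u' : cmap B W, ceq (ccomp u' phi) psi -> ceq u' u.

(* cube attachment: B is obtained from A by attaching an (n+1)-cube d along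
   the vertex v and the edges e_0..e_n, mapping d to the cube c of Y *)
Definition is_attach (A B Y : CubeCx) (gA : cmap A Y) (gB : cmap B Y)
    (phi : cmap A B) : Prop :=
  exists n (v : cell A 0) (e : 'I_n.+1 -> cell A 1) (c : cell Y n.+1)
         (d : cell B n.+1),
    (forall i, src (e i) = v) /\
    ~ (exists x : cell A n.+1, forall i, act (cedge i) x = e i) /\
    (forall i, fn gA (e i) = act (cedge i) c) /\
    (forall i, act (cedge i) d = fn phi (e i)) /\
    fn gB d = c /\
    forall (W : CubeCx) (psi : cmap A W) (w : cell W n.+1),
      (forall i, act (cedge i) w = fn psi (e i)) ->
      exists u : cmap B W, (ceq (ccomp u phi) psi /\ fn u d = w) /\
        forall u' : cmap B W, ceq (ccomp u' phi) psi -> fn u' d = w -> ceq u' u.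

(* Isomorphisms (over Y) are also
   allowed as steps: this lets finite sequences of moves be padded to
   infinite ones and does not change direct limits up to isomorphism. *)
Definition is_step (A B Y : CubeCx) (gA : cmap A Y) (gB : cmap B Y)
    (phi : cmap A B) : Prop :=
  ceq gA (ccomp gB phi) /\
  (is_iso phi \/ is_fold gA phi \/ is_cube_ident phi \/ is_attach gA gB phi).

(* (Z, iota, g) is a completion of f : X -> Y: Z is the direct limit of a
   sequence X -> X_0 -> X_1 -> ... of moves, iota : X -> Z is the induced
   map (so the basepoint of Z is the image of that of X), g : Z -> Y the
   induced cubical map, and g is a local isometry. *)
Definition is_completion (X Y : CubeCx) (f : cmap X Y)
    (Z : CubeCx) (iota : cmap X Z) (g : cmap Z Y) : Prop :=
  exists (Xs : nat -> CubeCx) (phi : forall i, cmap (Xs i) (Xs i.+1))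
         (gs : forall i, cmap (Xs i) Y) (psi0 : cmap X (Xs 0))
         (j : forall i, cmap (Xs i) Z),
    is_step f (gs 0) psi0 /\
    (forall i, is_step (gs i) (gs i.+1) (phi i)) /\
    (forall i, ceq (ccomp (j i.+1) (phi i)) (j i)) /\
    (forall (W : CubeCx) (k : forall i, cmap (Xs i) W),
       (forall i, ceq (ccomp (k i.+1) (phi i)) (k i)) ->
       exists u : cmap Z W, (forall i, ceq (ccomp u (j i)) (k i)) /\
         forall u' : cmap Z W, (forall i, ceq (ccomp u' (j i)) (k i)) ->
           ceq u' u) /\
    ceq iota (ccomp (j 0) psi0) /\
    (forall i, ceq (ccomp g (j i)) (gs i)) /\
    local_isometry g.

(* Main.v *)
Require Import Defs.
From mathcomp Require Import all_boot.
From Stdlib Require Import ClassicalEpsilon.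
Set Implicit Arguments.
Unset Strict Implicit.
Unset Printing Implicit Defensive.

Lemma face_vert0 n : is_face (vert0 n).
Proof.
exists (fun i : 'I_0 => match i with Ordinal _ h => False_rect _ (notF h) end).
exists (fun _ => false), (fun _ => false).
split; first by case=> ? h.
by move=> v; split; [case=> ? h | move=> j _; rewrite !ffunE].
Qed.

Lemma face_cedge n (i : 'I_n) : is_face (cedge i).
Proof.
exists (fun _ => i), (fun _ => false), (fun _ => false).
split; first by move=> a b _; apply/val_inj; case: a b => [[|?] ?] [[|?] ?].
move=> v; split.
- move=> k; rewrite !ffunE eqxx /= addbF.
  by have -> : k = ord0 by apply/val_inj; case: k => [[|]].
- move=> j hj; rewrite !ffunE.
  case: eqP => // E; by case: (hj ord0); rewrite E.
Qed.

Lemma fcomp_edge_vert0 n (i : 'I_n) : fcomp (cedge i) (vert0 1) = vert0 n.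
Proof. by apply/ffunP => v; rewrite !ffunE; apply/ffunP => j; rewrite !ffunE andbF. Qed.

Lemma base_edge (X : CubeCx) n (x : cell X n) (i : 'I_n) :
  src (act (cedge i) x) = base x.
Proof.
rewrite /src /base -act_comp ?fcomp_edge_vert0 //; [exact: face_cedge | exact: face_vert0].
Qed.

Lemma fn_base (X Y : CubeCx) (h : cmap X Y) n (x : cell X n) : fn h (base x) = base (fn h x).
Proof. by rewrite /base fn_nat //; exact: face_vert0. Qed.

Lemma fn_src (X Y : CubeCx) (h : cmap X Y) (x : cell X 1) : fn h (src x) = src (fn h x).
Proof. exact: fn_base. Qed.

Lemma fn_edge (X Y : CubeCx) (h : cmap X Y) n (i : 'I_n) (x : cell X n) :
  fn h (act (cedge i) x) = act (cedge i) (fn h x).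
Proof. by rewrite fn_nat //; exact: face_cedge. Qed.

Lemma base_of_edge (X : CubeCx) n (x : cell X n.+1) :
  base x = src (act (cedge ord0) x).
Proof. by rewrite base_edge. Qed.

Lemma ext (Y W A B : CubeCx) (gA : cmap A Y) (gB : cmap B Y) (gW : cmap W Y)
  (phi : cmap A B) :
  npc Y -> local_isometry gW -> is_step gA gB phi ->
  forall a : cmap A W, ceq (ccomp gW a) gA ->
  exists b : cmap B W, ceq (ccomp b phi) a /\ ceq (ccomp gW b) gB.
Proof.
move=> [npc1 _] [li1 li2] [hst hk] a ha.
rewrite /ceq /= in hst ha.
case: hk => [[k [hk1 hk2]]|[[e1 [e2 [ne [hs [hg [hp U]]]]]]|[[n [c1 [c2 [ne [hsk [hp U]]]]]]|[n [v [e [c [d [hsrc [hnot [hge [hde [hgd U]]]]]]]]]]]]].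
- exists (ccomp a k); split => m x /=; first by have := hk1 m x; rewrite /= => ->.
  by rewrite ha hst /=; have := hk2 m x; rewrite /= => ->.
- have ea : fn a e1 = fn a e2.
    apply: li1; first by rewrite -!fn_base /base -/(src e1) -/(src e2) hs.
    by rewrite ha /= hg -ha.
  have [u [hu _]] := U W a ea; rewrite /ceq /= in hu.
  have [w [_ wu]] := U Y gA hg.
  exists u; split => //.
  move=> m x; rewrite (wu (ccomp gW u)); last by move=> m' y /=; rewrite hu.
  rewrite (wu gB) // => m' y; by rewrite hst.
- have hb : base c1 = base c2 by apply: (hsk 0 (vert0 n)) => //; exact: face_vert0.
  have hgc : fn gA c1 = fn gA c2.
    apply: npc1; first by rewrite -!fn_base hb.
    move=> i; rewrite -!fn_edge (hsk 1 (cedge i)) //; exact: face_cedge.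
  have ea : fn a c1 = fn a c2.
    apply: li1; first by rewrite -!fn_base hb.
    by rewrite ha /= hgc -ha.
  have [u [hu _]] := U W a ea; rewrite /ceq /= in hu.
  have [w [_ wu]] := U Y gA hgc.
  exists u; split => //.
  move=> m x; rewrite (wu (ccomp gW u)); last by move=> m' y /=; rewrite hu.
  rewrite (wu gB) // => m' y; by rewrite hst.
- have hbc : base c = fn gW (fn a v).
    by rewrite base_of_edge -hge -fn_src hsrc ha.
  have [x [hbx hx]] : exists x : cell W n.+1, base x = fn a v /\ fn gW x = c.
    apply: (li2 _ _ _ hbc) => i; exists (fn a (e i)); split.
      by rewrite -fn_src hsrc.
    by rewrite ha hge.
  have hxe : forall i, act (cedge i) x = fn a (e i).
    move=> i; apply: li1.
      have := base_edge x i; rewrite /src /base => ->.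
      change (base x = src (fn a (e i))); by rewrite hbx -fn_src hsrc.
    by rewrite fn_edge hx ha hge.
  have [u [[hu hud] _]] := U W a x hxe; rewrite /ceq /= in hu.
  have [w [_ wu]] := U Y gA c (fun i => esym (hge i)).
  exists u; split => //.
  move=> m y; rewrite (wu (ccomp gW u)); first last.
  + by rewrite /= hud hx.
  + by move=> m' z /=; rewrite hu.
  rewrite (wu gB) // => m' z; by rewrite hst.
Qed.

Lemma uniq_step (Y W A B : CubeCx) (gA : cmap A Y) (gB : cmap B Y) (gW : cmap W Y)
  (phi : cmap A B) :
  local_isometry gW -> is_step gA gB phi ->
  forall a b : cmap B W, ceq (ccomp a phi) (ccomp b phi) ->
    ceq (ccomp gW a) (ccomp gW b) -> ceq a b.
Proof.
move=> [li1 li2] [hst hk] a b hab hg.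
rewrite /ceq /= in hst hab hg.
case: hk => [[k [hk1 hk2]]|[[e1 [e2 [ne [hs [hg' [hp U]]]]]]|[[n [c1 [c2 [ne [hsk [hp U]]]]]]|[n [v [e [c [d [hsrc [hnot [hge [hde [hgd U]]]]]]]]]]]]].
- move=> m y; have := hab m (fn k y); have := hk2 m y; rewrite /= => -> //.
- have e12 : fn (ccomp a phi) e1 = fn (ccomp a phi) e2 by rewrite /= hp.
  have [u [_ uq]] := U W (ccomp a phi) e12.
  move=> m y; rewrite (uq a) // (uq b) // => m' z /=; by rewrite hab.
- have e12 : fn (ccomp a phi) c1 = fn (ccomp a phi) c2 by rewrite /= hp.
  have [u [_ uq]] := U W (ccomp a phi) e12.
  move=> m y; rewrite (uq a) // (uq b) // => m' z /=; by rewrite hab.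
- have hed : forall i, act (cedge i) (fn a d) = fn (ccomp a phi) (e i) by move=> i; rewrite -fn_edge hde.
  have [u [_ uq]] := U W (ccomp a phi) (fn a d) hed.
  have hd : fn b d = fn a d.
    apply: li1; last by have := hg _ d.
    by rewrite -!fn_base base_of_edge hde fn_src; have := hab _ (src (e ord0)); rewrite /= !fn_src => ->.
  move=> m y; rewrite (uq a) // (uq b) // => m' z /=; by rewrite hab.
Qed.

Definition stepK (Y W A B : CubeCx) (gA : cmap A Y) (gB : cmap B Y) (gW : cmap W Y)
  (phi : cmap A B) (hn : npc Y) (hl : local_isometry gW) (hs : is_step gA gB phi)
  (a : {a : cmap A W | ceq (ccomp gW a) gA}) :
  {b : cmap B W | ceq (ccomp b phi) (proj1_sig a) /\ ceq (ccomp gW b) gB} :=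
  constructive_indefinite_description _ (ext hn hl hs (proj2_sig a)).

Lemma comp_exist (X Y : CubeCx) (f : cmap X Y) (Z : CubeCx) (iota : cmap X Z)
  (g : cmap Z Y) (W : CubeCx) (gW : cmap W Y) (a : cmap X W) :
  npc Y -> is_completion f iota g -> local_isometry gW -> ceq (ccomp gW a) f ->
  exists u : cmap Z W, ceq (ccomp u iota) a /\ ceq (ccomp gW u) g.
Proof.
move=> hn [Xs [phi [gs [psi0 [j [s0 [ss [coc [univ [hio [hg li]]]]]]]]]]] hl ha.
pose K := fix K (i : nat) : {b : cmap (Xs i) W | ceq (ccomp gW b) (gs i)} :=
  match i as i0 return {b : cmap (Xs i0) W | ceq (ccomp gW b) (gs i0)} with
  | 0 => let s := stepK hn hl s0 (exist _ a ha) in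
         exist _ (proj1_sig s) (proj2 (proj2_sig s))
  | i'.+1 => let s := stepK hn hl (ss i') (K i') in
         exist _ (proj1_sig s) (proj2 (proj2_sig s))
  end.
have K0 : ceq (ccomp (proj1_sig (K 0)) psi0) a.
  exact: (proj1 (proj2_sig (stepK hn hl s0 (exist _ a ha)))).
have KS : forall i, ceq (ccomp (proj1_sig (K i.+1)) (phi i)) (proj1_sig (K i)).
  move=> i; exact: (proj1 (proj2_sig (stepK hn hl (ss i) (K i)))).
have [u [hu _]] := univ W (fun i => proj1_sig (K i)) KS.
exists u; split.
  move=> m x; rewrite /= hio /=; have := hu 0 m (fn psi0 x); rewrite /= => ->.
  exact: K0.
have gcoc : forall i, ceq (ccomp (gs i.+1) (phi i)) (gs i).
  by move=> i m x; case: (ss i) => h _; rewrite h.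
have [w [_ wu]] := univ Y gs gcoc.
move=> m x; rewrite (wu (ccomp gW u)); first by rewrite (wu g).
move=> i m' y /=; have := hu i m' y; rewrite /= => ->.
exact: (proj2_sig (K i)).
Qed.

Lemma comp_uniq (X Y : CubeCx) (f : cmap X Y) (Z : CubeCx) (iota : cmap X Z)
  (g : cmap Z Y) (W : CubeCx) (gW : cmap W Y) (v1 v2 : cmap Z W) :
  is_completion f iota g -> local_isometry gW ->
  ceq (ccomp v1 iota) (ccomp v2 iota) -> ceq (ccomp gW v1) (ccomp gW v2) ->
  ceq v1 v2.
Proof.
move=> [Xs [phi [gs [psi0 [j [s0 [ss [coc [univ [hio [hg li]]]]]]]]]]] hl h1 h2.
have ind : forall i, ceq (ccomp v1 (j i)) (ccomp v2 (j i)).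
  elim=> [|i IH].
    apply: (uniq_step hl s0) => [m x|m x] /=.
      by have := hio m x; rewrite /= => <-; exact: h1.
    exact: h2.
  apply: (uniq_step hl (ss i)) => [m x|m x] /=.
    by have := coc i m x; rewrite /= => ->; exact: IH.
  exact: h2.
have cc : forall i, ceq (ccomp (ccomp v2 (j i.+1)) (phi i)) (ccomp v2 (j i)).
  by move=> i m x /=; have := coc i m x; rewrite /= => ->.
have [u [_ uq]] := univ W (fun i => ccomp v2 (j i)) cc.
move=> m x; rewrite (uq v1) // (uq v2) //.
Qed.

Lemma comp_facts (X Y : CubeCx) (f : cmap X Y) (Z : CubeCx) (iota : cmap X Z)
  (g : cmap Z Y) : is_completion f iota g ->
  ceq (ccomp g iota) f /\ local_isometry g.
Proof.
move=> [Xs [phi [gs [psi0 [j [[s0 _] [ss [coc [univ [hio [hg li]]]]]]]]]]].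
split => // m x /=; rewrite hio /=; have := hg 0 m (fn psi0 x); rewrite /= => ->.
by rewrite s0.
Qed.

Theorem theorem4p2 (X Y : CubeCx) (p : cell X 0) (q : cell Y 0)
    (f : cmap X Y) :
  fn f p = q -> compact Y -> npc Y -> connected X ->
  forall (Z : CubeCx) (iota : cmap X Z) (g : cmap Z Y)
         (Z' : CubeCx) (iota' : cmap X Z') (g' : cmap Z' Y),
    is_completion f iota g -> is_completion f iota' g' ->
    exists h : cmap Z Z',
      is_iso h /\ ceq (ccomp h iota) iota' /\ ceq (ccomp g' h) g.
Proof.
move=> _ _ hn _ Z iota g Z' iota' g' hc hc'.
have [gi li] := comp_facts hc.
have [gi' li'] := comp_facts hc'.
have [u [hu1 hu2]] := comp_exist hn hc li' gi'.
have [u' [hu1' hu2']] := comp_exist hn hc' li gi.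
exists u; split => //; exists u'; split.
- apply: (comp_uniq hc li) => m x /=.
    by have := hu1 m x; rewrite /= => ->; have := hu1' m x; rewrite /= => ->.
  by have := hu2' m (fn u x); rewrite /= => ->; have := hu2 m x; rewrite /= => ->.
- apply: (comp_uniq hc' li') => m x /=.
    by have := hu1' m x; rewrite /= => ->; have := hu1 m x; rewrite /= => ->.
  by have := hu2 m (fn u' x); rewrite /= => ->; have := hu2' m x; rewrite /= => ->.
Qed.
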